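(* Let $G=(V,E)$ be a connected locally finite graph with measure $\mu$ and edge weights $w$ as described in the context, and suppose (i) there is a constant $\mu_0>0$ with $\mu(x)\ge\mu_0$ for all $x\in V$; (ii) $w_{xy}=w_{yx}$ for all $xy\in E$, and there is a constant $D$ with $\sum_{y\sim x}w_{xy}\le D$ for all $x\in V$. Then $W^{1,p}(V)=W_0^{1,p}(V)$ for all $1\le p<+\infty$.
   Context: $G=(V,E)$ is a connected graph with infinitely many vertices in which every vertex has finitely many neighbours; $y\sim x$ means $xy\in E$. A measure $\mu:V\to(0,+\infty)$ is given, and each edge $xy\in E$ carries a weight $w_{xy}>0$. For $u:V\to\mathbb{R}$, $|\nabla u|(x)=\big(\frac{1}{2\mu(x)}\sum_{y\sim x}w_{xy}(u(y)-u(x))^2\big)^{1/2}$, and $\|f\|_p=(\sum_{x\in V}\mu(x)|f(x)|^p)^{1/p}$. $W^{1,p}(V)$ is the space of $u:V\to\mathbb{R}$ with $\|u\|_{W^{1,p}(V)}=\|u\|_p+\||\nabla u|\|_p<\infty$. $C_c(V)$ is the set of finitely supported functions and $W_0^{1,p}(V)$ is the completion (closure in $W^{1,p}(V)$) of $C_c(V)$ under $\|\cdot\|_{W^{1,p}(V)}$. *)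

(* Defs.v *)
From Stdlib Require Import Reals List Relations.
From Coquelicot Require Import Coquelicot.
Open Scope R_scope.

Definition lsum {V : Type} (f : V -> R) (l : list V) : R :=
  fold_right (fun x acc => f x + acc) 0 l.

Definition rpow (a p : R) : R :=
  if Rle_dec a 0 then 0 else Rpower a p.

(* A locally finite graph on V is given by the (duplicate-free) finite list of
   neighbours of each vertex: y ~ x iff In y (nbrs x). *)
Definition adj {V : Type} (nbrs : V -> list V) (x y : V) : Prop := In y (nbrs x).

Definition grad_norm {V : Type} (nbrs : V -> list V) (mu : V -> R)
  (w : V -> V -> R) (u : V -> R) (x : V) : R :=
  sqrt (/ (2 * mu x) * lsum (fun y => w x y * (u y - u x) ^ 2) (nbrs x)).

(* sum_{x in V} mu(x) |f(x)|^p, as an extended real (supremum over finite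
   duplicate-free families of vertices) *)
Definition lp_sum {V : Type} (mu : V -> R) (p : R) (f : V -> R) : Rbar :=
  Lub_Rbar (fun s => exists l : list V, NoDup l /\
                       s = lsum (fun x => mu x * rpow (Rabs (f x)) p) l).

(* ||f||_p (meaningful when lp_sum is finite) *)
Definition pnorm {V : Type} (mu : V -> R) (p : R) (f : V -> R) : R :=
  rpow (real (lp_sum mu p f)) (/ p).

Definition in_Lp {V : Type} (mu : V -> R) (p : R) (f : V -> R) : Prop :=
  is_finite (lp_sum mu p f).

Definition in_W1p {V : Type} (nbrs : V -> list V) (mu : V -> R)
  (w : V -> V -> R) (p : R) (u : V -> R) : Prop :=
  in_Lp mu p u /\ in_Lp mu p (grad_norm nbrs mu w u).

Definition W1p_norm {V : Type} (nbrs : V -> list V) (mu : V -> R)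
  (w : V -> V -> R) (p : R) (u : V -> R) : R :=
  pnorm mu p u + pnorm mu p (grad_norm nbrs mu w u).

Definition finitely_supported {V : Type} (f : V -> R) : Prop :=
  exists l : list V, forall x, ~ In x l -> f x = 0.

Definition in_W01p {V : Type} (nbrs : V -> list V) (mu : V -> R)
  (w : V -> V -> R) (p : R) (u : V -> R) : Prop :=
  in_W1p nbrs mu w p u /\
  forall eps, 0 < eps -> exists phi : V -> R, finitely_supported phi /\
    W1p_norm nbrs mu w p (fun x => u x - phi x) < eps.

(* Main.v *)
Require Import Defs.
From Stdlib Require Import Reals List Relations.
From Coquelicot Require Import Coquelicot.
Open Scope R_scope.
From Stdlib Require Import Lra Classical ClassicalEpsilon.

Lemma lsum_app {V} (f : V -> R) l1 l2 : lsum f (l1 ++ l2) = lsum f l1 + lsum f l2.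
Proof. induction l1; simpl; [lra|rewrite IHl1; lra]. Qed.

Lemma lsum_le_in {V} (f g : V -> R) l : (forall x, In x l -> f x <= g x) -> lsum f l <= lsum g l.
Proof. induction l; simpl; intros H; [lra|].
  assert (f a <= g a) by auto. assert (lsum f l <= lsum g l) by auto. lra. Qed.

Lemma lsum_nonneg {V} (f : V -> R) l : (forall x, In x l -> 0 <= f x) -> 0 <= lsum f l.
Proof. induction l; simpl; intros H; [lra|].
  assert (0 <= f a) by auto. assert (0 <= lsum f l) by auto. lra. Qed.

Lemma lsum_lin {V} (f g : V -> R) a b l :
  lsum (fun x => a * f x + b * g x) l = a * lsum f l + b * lsum g l.
Proof. induction l; simpl; [lra|rewrite IHl; ring]. Qed.

Lemma lsum_grad {V} (w a : V -> R) (b : R) l :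
  lsum (fun y => w y * (2 * a y + 2 * b)) l = 2 * lsum (fun y => w y * a y) l + 2 * b * lsum w l.
Proof. induction l; simpl; [lra|rewrite IHl; ring]. Qed.

Definition cut {V} (G : list V) (f : V -> R) (x : V) : R :=
  if excluded_middle_informative (In x G) then 0 else f x.

Definition notinb {V} (G : list V) (x : V) : bool :=
  if excluded_middle_informative (In x G) then false else true.

Lemma lsum_cut {V} G (f : V -> R) l : lsum (cut G f) l = lsum f (filter (notinb G) l).
Proof. induction l; simpl; [lra|]. rewrite IHl.
  assert (E : cut G f a = if notinb G a then f a else 0).
  { unfold cut, notinb. destruct excluded_middle_informative; reflexivity. }
  rewrite E. destruct (notinb G a); simpl; lra. Qed.

Definition Sset {V} (f : V -> R) := fun s => exists l : list V, NoDup l /\ s = lsum f l.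

Lemma lub_le {V} (h : V -> R) M : (forall l, NoDup l -> lsum h l <= M) ->
  is_finite (Lub_Rbar (Sset h)) /\ 0 <= real (Lub_Rbar (Sset h)) <= M.
Proof.
  intros H. destruct (Lub_Rbar_correct (Sset h)) as [Hub Hl].
  assert (H1 : Rbar_le (Lub_Rbar (Sset h)) M).
  { apply Hl. intros x [l [Hn ->]]. simpl. auto. }
  assert (H0 : Rbar_le 0 (Lub_Rbar (Sset h))).
  { apply Hub. exists nil. split; [constructor|reflexivity]. }
  destruct (Lub_Rbar (Sset h)); simpl in *; try contradiction.
  split; [reflexivity|lra].
Qed.

Lemma tail {V} (f : V -> R) : (forall x, 0 <= f x) -> is_finite (Lub_Rbar (Sset f)) ->
  forall d, 0 < d -> exists F : list V, forall G, incl F G ->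
    forall l, NoDup l -> lsum (cut G f) l <= d.
Proof.
  intros Hf Hfin d Hd.
  destruct (Lub_Rbar_correct (Sset f)) as [Hub Hl].
  set (S := real (Lub_Rbar (Sset f))).
  assert (HS : Lub_Rbar (Sset f) = Finite S) by (symmetry; exact Hfin).
  assert (Hex : exists F, NoDup F /\ S - d < lsum f F).
  { apply NNPP; intro Hn.
    assert (Hub' : is_ub_Rbar (Sset f) (S - d)).
    { intros x [l [Hn' ->]]. simpl. apply Rnot_lt_le. intro Hlt. apply Hn. eauto. }
    specialize (Hl _ Hub'). rewrite HS in Hl. simpl in Hl. lra. }
  destruct Hex as [F [HF HFs]]. exists F. intros G HG l Hl'.
  rewrite lsum_cut.
  assert (Hnd : NoDup (filter (notinb G) l ++ F)).
  { apply NoDup_app; [apply NoDup_filter; auto|auto|].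
    intros a Ha HaF. apply filter_In in Ha. destruct Ha as [_ Ha].
    unfold notinb in Ha. destruct excluded_middle_informative as [|n]; [discriminate|].
    apply n, HG, HaF. }
  assert (Hle : Rbar_le (lsum f (filter (notinb G) l ++ F)) (Lub_Rbar (Sset f))).
  { apply Hub. eexists; split; [exact Hnd|reflexivity]. }
  rewrite HS in Hle. simpl in Hle. rewrite lsum_app in Hle. lra.
Qed.

Lemma rpow_nonneg a p : 0 <= rpow a p.
Proof. unfold rpow. destruct Rle_dec; [lra|]. unfold Rpower. left; apply exp_pos. Qed.

Lemma rpow_pos a p : 0 < a -> rpow a p = Rpower a p.
Proof. intros. unfold rpow. destruct Rle_dec; [lra|reflexivity]. Qed.

Lemma rpow_zero p : rpow 0 p = 0.
Proof. unfold rpow. destruct Rle_dec; [reflexivity|lra]. Qed.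

Lemma rpow_le a b p : 0 <= a <= b -> 0 <= p -> rpow a p <= rpow b p.
Proof. intros Hab Hp. unfold rpow at 1. destruct Rle_dec. apply rpow_nonneg.
  rewrite rpow_pos by lra. apply Rle_Rpower_l; lra. Qed.

Lemma rpow_mul k a p : 0 < k -> 0 <= a -> rpow (k * a) p = rpow k p * rpow a p.
Proof. intros Hk Ha. destruct (Req_dec a 0) as [->|Ha'].
  rewrite Rmult_0_r, !rpow_zero; ring.
  rewrite !rpow_pos by (try apply Rmult_lt_0_compat; lra).
  symmetry; apply Rpower_mult_distr; lra. Qed.

Lemma rpow_max a b p : rpow (Rmax a b) p <= rpow a p + rpow b p.
Proof. unfold Rmax; destruct Rle_dec; pose proof (rpow_nonneg a p); pose proof (rpow_nonneg b p); lra. Qed.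

Lemma lsum_zero {V} (f : V -> R) l : (forall x, In x l -> f x = 0) -> lsum f l = 0.
Proof. induction l; simpl; intros H; [lra|]. rewrite H by auto. rewrite IHl by auto. lra. Qed.

Lemma rpow_sum_bound a b p : 0 <= a -> 0 <= b -> 0 <= p ->
  rpow (a + b) p <= rpow 2 p * (rpow a p + rpow b p).
Proof.
  intros Ha Hb Hp.
  apply Rle_trans with (rpow (2 * Rmax a b) p).
  { apply rpow_le; [|lra]. split; [lra|]. unfold Rmax; destruct Rle_dec; lra. }
  rewrite rpow_mul; [| lra | unfold Rmax; destruct Rle_dec; lra].
  apply Rmult_le_compat_l; [apply rpow_nonneg|apply rpow_max].
Qed.

Lemma pnorm_small {V} (mu : V -> R) p (f : V -> R) e M :
  1 <= p -> 0 < e -> M <= Rpower e p ->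
  (forall l, NoDup l -> lsum (fun x => mu x * rpow (Rabs (f x)) p) l <= M) ->
  pnorm mu p f <= e.
Proof.
  intros Hp He HM Hl.
  destruct (lub_le _ M Hl) as [_ [H0 H1]].
  unfold pnorm, lp_sum. fold (Sset (fun x => mu x * rpow (Rabs (f x)) p)).
  apply Rle_trans with (rpow (Rpower e p) (/ p)).
  { apply rpow_le; [lra|]. left; apply Rinv_0_lt_compat; lra. }
  rewrite rpow_pos by (unfold Rpower; apply exp_pos).
  rewrite Rpower_mult, Rinv_r by lra. rewrite Rpower_1 by lra. lra.
Qed.

Lemma grad_bound {V} (nbrs : V -> list V) (mu : V -> R) (w : V -> V -> R) (u v : V -> R)
  x mu0 D' : 0 < mu0 -> mu0 <= mu x -> 0 < D' ->
  (forall y, In y (nbrs x) -> 0 <= w x y) ->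
  lsum (fun y => w x y) (nbrs x) <= D' ->
  (forall y, (v y - v x)^2 <= 2 * (u y - u x)^2 + 2 * (u x)^2) ->
  grad_norm nbrs mu w v x <= sqrt 2 * grad_norm nbrs mu w u x + sqrt (D' / mu0) * Rabs (u x).
Proof.
  intros Hm0 Hmx HD' Hw HW Hv.
  unfold grad_norm.
  set (A := lsum (fun y => w x y * (u y - u x) ^ 2) (nbrs x)).
  set (W := lsum (fun y => w x y) (nbrs x)).
  set (Av := lsum (fun y => w x y * (v y - v x) ^ 2) (nbrs x)).
  assert (HA : 0 <= A).
  { apply lsum_nonneg; intros y Hy. apply Rmult_le_pos; [auto|apply pow2_ge_0]. }
  assert (HW0 : 0 <= W) by (apply lsum_nonneg; auto).
  assert (HAv : Av <= 2 * A + 2 * (u x)^2 * W).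
  { unfold Av, A, W. rewrite <- lsum_grad. apply lsum_le_in. intros y Hy.
    apply Rmult_le_compat_l; [auto|apply Hv]. }
  assert (Hmu : 0 < mu x) by lra.
  set (g := sqrt (/ (2 * mu x) * A)).
  assert (Hg0 : 0 <= / (2 * mu x) * A).
  { apply Rmult_le_pos; [left; apply Rinv_0_lt_compat; lra|auto]. }
  assert (Hg2 : g * g = / (2 * mu x) * A) by (apply sqrt_sqrt; auto).
  assert (Hg : 0 <= g) by apply sqrt_pos.
  set (c := sqrt (D' / mu0)).
  assert (Hc0 : 0 <= D' / mu0) by (left; apply Rdiv_lt_0_compat; lra).
  assert (Hc2 : c * c = D' / mu0) by (apply sqrt_sqrt; auto).
  assert (Hc : 0 <= c) by apply sqrt_pos.
  assert (Hs2 : sqrt 2 * sqrt 2 = 2) by (apply sqrt_sqrt; lra).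
  assert (Hs : 0 <= sqrt 2) by apply sqrt_pos.
  assert (Hu : 0 <= Rabs (u x)) by apply Rabs_pos.
  assert (Hu2 : Rabs (u x) * Rabs (u x) = (u x)^2).
  { rewrite <- Rabs_mult. rewrite Rabs_right; [ring|]. apply Rle_ge. nra. }
  rewrite <- (sqrt_square (sqrt 2 * g + c * Rabs (u x))) by nra.
  apply sqrt_le_1_alt.
  assert (HWm : W / mu x <= D' / mu0).
  { apply Rle_trans with (D' / mu x).
    - unfold Rdiv. apply Rmult_le_compat_r; [left; apply Rinv_0_lt_compat; lra|]. exact HW.
    - unfold Rdiv. apply Rmult_le_compat_l; [lra|]. apply Rinv_le_contravar; lra. }
  assert (Hstep : / (2 * mu x) * Av <= 2 * (g * g) + (u x)^2 * (W / mu x)).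
  { rewrite Hg2. apply Rle_trans with (/ (2 * mu x) * (2 * A + 2 * (u x)^2 * W)).
    - apply Rmult_le_compat_l; [left; apply Rinv_0_lt_compat; lra|auto].
    - right. field. lra. }
  assert (Hux : 0 <= (u x)^2) by apply pow2_ge_0.
  assert (H3 : (u x)^2 * (W / mu x) <= (u x)^2 * (c * c)).
  { rewrite Hc2. apply Rmult_le_compat_l; auto. }
  assert (H4 : 0 <= sqrt 2 * g * c * Rabs (u x)).
  { repeat apply Rmult_le_pos; auto. }
  replace ((sqrt 2 * g + c * Rabs (u x)) * (sqrt 2 * g + c * Rabs (u x)))
    with ((sqrt 2 * sqrt 2) * (g * g) + 2 * (sqrt 2 * g * c * Rabs (u x)) + (c * c) * (Rabs (u x) * Rabs (u x))) by ring.
  rewrite Hs2, Hu2. nra.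
Qed.

Theorem proposition6p2
  (V : Type) (nbrs : V -> list V) (mu : V -> R) (w : V -> V -> R)
  (* graph structure: locally finite (finite neighbour lists), undirected, no loops *)
  (Hnodup : forall x, NoDup (nbrs x))
  (Hsym_adj : forall x y, adj nbrs x y -> adj nbrs y x)
  (Hloop : forall x, ~ adj nbrs x x)
  (* connected *)
  (Hconn : forall x y, clos_refl_trans V (adj nbrs) x y)
  (* infinitely many vertices *)
  (Hinf : forall l : list V, exists x, ~ In x l)
  (* positive measure and positive edge weights *)
  (Hmu : forall x, 0 < mu x)
  (Hw : forall x y, adj nbrs x y -> 0 < w x y)
  (* (i) *)
  (Hmu0 : exists mu0, 0 < mu0 /\ forall x, mu0 <= mu x)
  (* (ii) *)
  (Hwsym : forall x y, adj nbrs x y -> w x y = w y x)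
  (HD : exists D, forall x, lsum (fun y => w x y) (nbrs x) <= D) :
  forall p : R, 1 <= p ->
  forall u : V -> R, in_W1p nbrs mu w p u <-> in_W01p nbrs mu w p u.
Proof.
  intros p Hp u. split; [|intros [H _]; exact H].
  intros [HuL HgL]. split; [split; auto|]. intros eps Heps.
  destruct Hmu0 as [mu0 [Hmu0p Hmu0']]. destruct HD as [D HD].
  set (D' := Rabs D + 1).
  assert (HD' : 0 < D') by (unfold D'; pose proof (Rabs_pos D); lra).
  assert (HDD : forall x, lsum (fun y => w x y) (nbrs x) <= D').
  { intros x. apply Rle_trans with D; auto. unfold D'. pose proof (Rle_abs D); lra. }
  set (c := sqrt (D' / mu0)).
  assert (Hc : 0 < c) by (apply sqrt_lt_R0; apply Rdiv_lt_0_compat; lra).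
  set (f1 := fun x => mu x * rpow (Rabs (u x)) p).
  set (f2 := fun x => mu x * rpow (Rabs (grad_norm nbrs mu w u x)) p).
  assert (Hf1 : forall x, 0 <= f1 x).
  { intros x; unfold f1; apply Rmult_le_pos; [left; auto|apply rpow_nonneg]. }
  assert (Hf2 : forall x, 0 <= f2 x).
  { intros x; unfold f2; apply Rmult_le_pos; [left; auto|apply rpow_nonneg]. }
  set (K1 := rpow 2 p * rpow (sqrt 2) p).
  set (K2 := rpow 2 p * rpow c p).
  assert (HK1 : 0 <= K1) by (apply Rmult_le_pos; apply rpow_nonneg).
  assert (HK2 : 0 <= K2) by (apply Rmult_le_pos; apply rpow_nonneg).
  set (B := Rpower (eps / 4) p).
  assert (HB : 0 < B) by (unfold B, Rpower; apply exp_pos).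
  set (d := B / (1 + K1 + K2)).
  assert (Hd : 0 < d) by (apply Rdiv_lt_0_compat; lra).
  assert (HdB : d * (1 + K1 + K2) = B) by (unfold d; field; lra).
  destruct (tail f1 Hf1 HuL d Hd) as [F1 HF1].
  destruct (tail f2 Hf2 HgL d Hd) as [F2 HF2].
  set (F := F1 ++ F2).
  set (K := F ++ flat_map nbrs F).
  exists (fun x => if excluded_middle_informative (In x K) then u x else 0).
  split.
  { exists K. intros x Hx. destruct excluded_middle_informative; tauto. }
  set (v := fun x => u x - (if excluded_middle_informative (In x K) then u x else 0)).
  assert (Hvin : forall x, In x K -> v x = 0).
  { intros x Hx; unfold v; destruct excluded_middle_informative; [ring|tauto]. }
  assert (Hvout : forall x, ~ In x K -> v x = u x).
  { intros x Hx; unfold v; destruct excluded_middle_informative; [tauto|ring]. }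
  assert (HFK : forall x, In x F -> In x K) by (intros; apply in_or_app; auto).
  assert (HFN : forall x y, In x F -> In y (nbrs x) -> In y K).
  { intros x y Hx Hy. apply in_or_app; right. apply in_flat_map. eauto. }
  assert (HF1F : incl F1 F) by (apply incl_appl, incl_refl).
  assert (HF2F : incl F2 F) by (apply incl_appr, incl_refl).
  assert (Hp0 : 0 <= p) by lra.
  assert (N1 : pnorm mu p v <= eps / 4).
  { apply (pnorm_small mu p v (eps/4) d Hp); [lra| |].
    - fold B. assert (0 <= d * (K1 + K2)) by (apply Rmult_le_pos; lra). lra.
    - intros l Hl. apply Rle_trans with (lsum (cut F f1) l); [|apply HF1; auto].
      apply lsum_le_in. intros x _. unfold cut, f1.
      destruct excluded_middle_informative as [i|n].
      + rewrite Hvin by auto. rewrite Rabs_R0, rpow_zero. lra.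
      + destruct (excluded_middle_informative (In x K)) as [i'|n'].
        * rewrite Hvin by auto. rewrite Rabs_R0, rpow_zero, Rmult_0_r.
          apply Rmult_le_pos; [left; auto|apply rpow_nonneg].
        * rewrite Hvout by auto. lra. }
  assert (N2 : pnorm mu p (grad_norm nbrs mu w v) <= eps / 4).
  { apply (pnorm_small mu p _ (eps/4) (K1 * d + K2 * d) Hp); [lra| |].
    - fold B. rewrite <- HdB. lra.
    - intros l Hl.
      apply Rle_trans with (lsum (fun x => K1 * cut F f2 x + K2 * cut F f1 x) l).
      2:{ rewrite lsum_lin. apply Rplus_le_compat; apply Rmult_le_compat_l; auto. }
      apply lsum_le_in. intros x _.
      assert (Hc1 : 0 <= cut F f1 x) by (unfold cut; destruct excluded_middle_informative; [lra|auto]).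
      assert (Hc2 : 0 <= cut F f2 x) by (unfold cut; destruct excluded_middle_informative; [lra|auto]).
      unfold cut at 1 2. destruct excluded_middle_informative as [i|n].
      + assert (E : grad_norm nbrs mu w v x = 0).
        { unfold grad_norm. rewrite lsum_zero. rewrite Rmult_0_r; apply sqrt_0.
          intros y Hy. rewrite (Hvin y) by eauto. rewrite (Hvin x) by auto. ring. }
        rewrite E, Rabs_R0, rpow_zero. nra.
      + assert (Hgb := grad_bound nbrs mu w u v x mu0 D' Hmu0p (Hmu0' x) HD'
           (fun y Hy => Rlt_le _ _ (Hw x y Hy)) (HDD x)).
        assert (Hgv : grad_norm nbrs mu w v x <=
                  sqrt 2 * grad_norm nbrs mu w u x + sqrt (D' / mu0) * Rabs (u x)).
        { apply Hgb. intros y.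
          destruct (excluded_middle_informative (In x K)) as [ix|nx];
          destruct (excluded_middle_informative (In y K)) as [iy|ny];
          [rewrite (Hvin x ix), (Hvin y iy)|rewrite (Hvin x ix), (Hvout y ny)
          |rewrite (Hvout x nx), (Hvin y iy)|rewrite (Hvout x nx), (Hvout y ny)];
          pose proof (pow2_ge_0 (u y - 2 * u x)); pose proof (pow2_ge_0 (u y - u x));
          pose proof (pow2_ge_0 (u x)); nra. }
        fold c in Hgv.
        assert (Hg0 : 0 <= grad_norm nbrs mu w u x) by apply sqrt_pos.
        assert (Hgv0 : 0 <= grad_norm nbrs mu w v x) by apply sqrt_pos.
        rewrite (Rabs_right (grad_norm nbrs mu w v x)) by lra.
        unfold f1, f2. rewrite (Rabs_right (grad_norm nbrs mu w u x)) by lra.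
        assert (Hs : 0 < sqrt 2) by (apply sqrt_lt_R0; lra).
        assert (R1 : rpow (grad_norm nbrs mu w v x) p <=
                     K1 * rpow (grad_norm nbrs mu w u x) p + K2 * rpow (Rabs (u x)) p).
        { apply Rle_trans with (rpow (sqrt 2 * grad_norm nbrs mu w u x + c * Rabs (u x)) p).
          { apply rpow_le; auto. }
          eapply Rle_trans; [apply rpow_sum_bound; auto;
             apply Rmult_le_pos; try lra; apply Rabs_pos|].
          rewrite !rpow_mul by (try lra; apply Rabs_pos).
          unfold K1, K2. right; ring. }
        pose proof (Hmu x). nra. }
  unfold W1p_norm. fold v. lra.
Qed.
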